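(* Let $f\in\mathcal F_{\mathrm{op}}$ and let $n\ge 1$. Then the quantum $\chi^2$-divergence $\chi^2_f(\rho,\sigma)$ is jointly convex in $(\rho,\sigma)$ on pairs of positive definite $n\times n$ density matrices. That is, for all positive definite density matrices $\rho_1,\rho_2,\sigma_1,\sigma_2\in M_n(\mathbb C)$ and all $\lambda\in[0,1]$, \[ \chi^2_f\bigl(\lambda\rho_1+(1-\lambda)\rho_2,\ \lambda\sigma_1+(1-\lambda)\sigma_2\bigr)\le \lambda\,\chi^2_f(\rho_1,\sigma_1)+(1-\lambda)\,\chi^2_f(\rho_2,\sigma_2). \]
   Context: $\mathcal F_{\mathrm{op}}$ denotes the class of functions $f:(0,\infty)\to(0,\infty)$ such that (i) $f$ is operator monotone, (ii) $f(t)=t\,f(t^{-1})$ for all $t>0$, and (iii) $f(1)=1$. $M_n(\mathbb C)$ is regarded as a Hilbert space with the inner product $(A\mid B)=\mathrm{Tr}\,A^*B$. A density matrix is a positive semidefinite matrix of trace one. For a positive definite $\sigma\in M_n(\mathbb C)$, the (super)operators $L_\sigma,R_\sigma$ on $M_n(\mathbb C)$ are defined by $L_\sigma A=\sigma A$ and $R_\sigma A=A\sigma$; they are commuting positive definite operators on $M_n(\mathbb C)$, so functions of the pair $(L_\sigma,R_\sigma)$ are defined by joint functional calculus. For $f\in\mathcal F_{\mathrm{op}}$, the Morozova–Chentsov function is $c(x,y)=\dfrac{1}{y\,f(x y^{-1})}$ for $x,y>0$, and the associated monotone metric is $K_\sigma(A,B)=\mathrm{Tr}\,A^*\,c(L_\sigma,R_\sigma)(B)$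 for positive definite $\sigma$ and $A,B\in M_n(\mathbb C)$. The $\chi^2_f$-divergence of density matrices $\rho,\sigma$ with $\sigma$ positive definite is \[ \chi^2_f(\rho,\sigma)=K_\sigma(\rho-\sigma,\rho-\sigma)=\mathrm{Tr}\,(\rho-\sigma)\,c(L_\sigma,R_\sigma)(\rho-\sigma). \] *)

(* Defs.v *)
(* Matrices over an arbitrary numClosedFieldType C
   (the complex numbers being the intended instance). *)
From HB Require Import structures.
From mathcomp Require Import all_boot all_order all_algebra.
Set Implicit Arguments. Unset Strict Implicit. Unset Printing Implicit Defensive.
Import Order.TTheory GRing.Theory Num.Theory.
Local Open Scope ring_scope.
Local Open Scope sesquilinear_scope.

Section Defs.
Variable C : numClosedFieldType.

Definition adjmx (m n : nat) (A : 'M[C]_(m, n)) : 'M[C]_(n, m) := A ^t*.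

Definition hermitian_mx (n : nat) (A : 'M[C]_n) : Prop := adjmx A = A.

Definition psd_mx (n : nat) (A : 'M[C]_n) : Prop :=
  hermitian_mx A /\ forall v : 'rV[C]_n, 0 <= (v *m A *m adjmx v) 0 0.

Definition pd_mx (n : nat) (A : 'M[C]_n) : Prop :=
  hermitian_mx A /\ forall v : 'rV[C]_n, v != 0 -> 0 < (v *m A *m adjmx v) 0 0.

Definition loewner_le (n : nat) (A B : 'M[C]_n) : Prop := psd_mx (B - A).

Definition density_mx (n : nat) (A : 'M[C]_n) : Prop := psd_mx A /\ \tr A = 1.
Definition pd_density_mx (n : nat) (A : 'M[C]_n) : Prop := pd_mx A /\ \tr A = 1.

(* Functional calculus of a Hermitian (normal) matrix via the library's
   spectral decomposition  A = P^-1 diag(d) P  (P unitary):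
   f(A) = P^-1 diag(f d) P. *)
Definition mxfun (f : C -> C) (n : nat) (A : 'M[C]_n) : 'M[C]_n :=
  invmx (spectralmx A) *m diag_mx (map_mx f (spectral_diag A)) *m spectralmx A.

Definition operator_monotone (f : C -> C) : Prop :=
  forall (m : nat) (A B : 'M[C]_m),
    pd_mx A -> pd_mx B -> loewner_le A B -> loewner_le (mxfun f A) (mxfun f B).

(* The class F_op.  f is only relevant on (0,oo); its values elsewhere are
   ignored by every condition below. *)
Definition F_op (f : C -> C) : Prop :=
  [/\ (forall t, 0 < t -> 0 < f t),
      operator_monotone f,
      (forall t, 0 < t -> f t = t * f t^-1) &
      f 1 = 1].

Definition MC_fun (f : C -> C) (x y : C) : C := (y * f (x / y))^-1.

(* Joint functional calculus g(L_sigma, R_sigma) applied to X.  With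
   sigma = P^-1 diag(d) P (P unitary, rows u_i^* of P), the operators
   X |-> u_i u_j^* are joint eigenvectors of (L_sigma, R_sigma) with joint
   eigenvalue (d_i, d_j), so
   g(L_sigma,R_sigma)(X) = sum_{i,j} g(d_i,d_j) (u_i^* X u_j) u_i u_j^*
                         = P^-1 [ g(d_i,d_j) (P X P^-1)_{ij} ]_{ij} P. *)
Definition joint_fun (g : C -> C -> C) (n : nat) (sigma X : 'M[C]_n) : 'M[C]_n :=
  let P := spectralmx sigma in
  let d := spectral_diag sigma in
  invmx P *m (\matrix_(i, j) (g (d 0 i) (d 0 j) * (P *m X *m invmx P) i j)) *m P.

Definition monotone_metric (f : C -> C) (n : nat) (sigma A B : 'M[C]_n) : C :=
  \tr (adjmx A *m joint_fun (MC_fun f) sigma B).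

Definition chi2 (f : C -> C) (n : nat) (rho sigma : 'M[C]_n) : C :=
  monotone_metric f sigma (rho - sigma) (rho - sigma).

End Defs.

(* Main.v *)
Require Import Defs.
From HB Require Import structures.
From mathcomp Require Import all_boot all_order all_algebra ring.
Set Implicit Arguments. Unset Strict Implicit. Unset Printing Implicit Defensive.
Import Order.TTheory GRing.Theory Num.Theory Num.Def.
Local Open Scope ring_scope.
Local Open Scope sesquilinear_scope.

Section Aux.
Variable C : numClosedFieldType.

Fact mk_key : unit. Proof. by []. Qed.
Definition mk m (Q : 'M[C]_m) (e : 'rV[C]_m) : 'M[C]_m :=
  locked_with mk_key (Q^t* *m diag_mx e *m Q).
Lemma mkE m (Q : 'M[C]_m) (e : 'rV[C]_m) : mk Q e = Q^t* *m diag_mx e *m Q.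
Proof. by rewrite /mk unlock. Qed.
Definition qf m (A : 'M[C]_m) (v : 'rV[C]_m) := (v *m A *m v^t*) 0 0.
Definition rmul m (a b : 'rV[C]_m) := \row_k (a 0 k * b 0 k).

Lemma unitaryK m (Q : 'M[C]_m) : Q \is unitarymx -> Q^t* *m Q = 1%:M.
Proof. by move=> /unitarymxP /mulmx1C. Qed.
Lemma unitaryV m (Q : 'M[C]_m) : Q \is unitarymx -> Q *m Q^t* = 1%:M.
Proof. by move=> /unitarymxP. Qed.

Lemma ctM m n p (A : 'M[C]_(m,n)) (B : 'M[C]_(n,p)) : (A *m B)^t* = B^t* *m A^t*.
Proof. by rewrite trmx_mul map_mxM. Qed.
Lemma ctK m n (A : 'M[C]_(m,n)) : A^t*^t* = A.
Proof. exact: trmxCK. Qed.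
Lemma ctD m n (A B : 'M[C]_(m,n)) : (A + B)^t* = A^t* + B^t*.
Proof. by apply/matrixP=> i j; rewrite !mxE rmorphD. Qed.
Lemma ctN m n (A : 'M[C]_(m,n)) : (- A)^t* = - A^t*.
Proof. by apply/matrixP=> i j; rewrite !mxE rmorphN. Qed.
Lemma ctZ m n a (A : 'M[C]_(m,n)) : (a *: A)^t* = a^* *: A^t*.
Proof. by apply/matrixP=> i j; rewrite !mxE rmorphM. Qed.
Lemma ct1 m : (1%:M : 'M[C]_m)^t* = 1%:M.
Proof. by rewrite tr_scalar_mx map_scalar_mx /= conjC1. Qed.
Lemma ct0 m n : (0 : 'M[C]_(m,n))^t* = 0.
Proof. by apply/matrixP=> i j; rewrite !mxE conjC0. Qed.
Lemma ct_diag m (e : 'rV[C]_m) : (diag_mx e)^t* = diag_mx (map_mx conjC e).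
Proof. by rewrite tr_diag_mx map_diag_mx. Qed.

Lemma mk_mul m (Q : 'M[C]_m) a b : Q \is unitarymx ->
  mk Q a *m mk Q b = mk Q (rmul a b).
Proof.
move=> uQ; rewrite !mkE !mulmxA -(mulmxA _ Q (Q^t*)) unitaryV // mulmx1.
by rewrite -(mulmxA (Q^t*)) mulmx_diag.
Qed.

Lemma mk_adj m (Q : 'M[C]_m) (e : 'rV[C]_m) : (mk Q e)^t* = mk Q (map_mx conjC e).
Proof. by rewrite !mkE !ctM ctK ct_diag mulmxA. Qed.

Lemma mk_add m (Q : 'M[C]_m) a b : mk Q a + mk Q b = mk Q (a + b).
Proof. by rewrite !mkE raddfD /= mulmxDr mulmxDl. Qed.

Lemma diag_mxZ m (a : C) (e : 'rV[C]_m) : diag_mx (a *: e) = a *: diag_mx e.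
Proof. by apply/matrixP=> i j; rewrite !mxE mulrnAr. Qed.

Lemma mk_scale m (Q : 'M[C]_m) a e : a *: mk Q e = mk Q (a *: e).
Proof. by rewrite !mkE diag_mxZ -scalemxAr -scalemxAl. Qed.

Lemma mk1 m (Q : 'M[C]_m) : Q \is unitarymx -> mk Q (const_mx 1) = 1%:M.
Proof. by move=> uQ; rewrite !mkE diag_const_mx mulmx1 unitaryK. Qed.

Lemma qf_diag m (w e : 'rV[C]_m) :
  (w *m diag_mx e *m w^t*) 0 0 = \sum_k e 0 k * (w 0 k * (w 0 k)^*).
Proof.
rewrite mul_mx_diag !mxE; apply: eq_bigr => k _; rewrite !mxE.
by rewrite mulrA [w 0 k * _]mulrC.
Qed.

Lemma qf_mk m (Q : 'M[C]_m) e v :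
  qf (mk Q e) v = \sum_k e 0 k * ((v *m Q^t*) 0 k * ((v *m Q^t*) 0 k)^*).
Proof.
rewrite /qf !mkE -qf_diag ctM ctK !mulmxA.
done.
Qed.

Lemma qfD m (A B : 'M[C]_m) v : qf (A + B) v = qf A v + qf B v.
Proof. by rewrite /qf mulmxDr mulmxDl mxE. Qed.
Lemma qfN m (A : 'M[C]_m) v : qf (- A) v = - qf A v.
Proof. by rewrite /qf mulmxN mulNmx mxE. Qed.
Lemma qfB m (A B : 'M[C]_m) v : qf (A - B) v = qf A v - qf B v.
Proof. by rewrite qfD qfN. Qed.
Lemma qfZ m (A : 'M[C]_m) a v : qf (a *: A) v = a * qf A v.
Proof. by rewrite /qf -scalemxAr -scalemxAl mxE. Qed.

Lemma qf_conj m p (H : 'M[C]_(p,m)) (A : 'M[C]_p) v :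
  qf (H^t* *m A *m H) v = qf A (v *m H^t*).
Proof. by rewrite /qf ctM ctK !mulmxA. Qed.


Lemma row_neq0 m (w : 'rV[C]_m) : w != 0 -> exists k, w 0 k != 0.
Proof.
move=> w0; case: (pickP (fun k => w 0 k != 0)) => [k wk|H]; first by exists k.
have w00 : w = 0 by apply/rowP=> k; move: (H k) => /negbFE/eqP ->; rewrite mxE.
by rewrite w00 eqxx in w0.
Qed.

Lemma pd_mk m (Q : 'M[C]_m) (e : 'rV[C]_m) : Q \is unitarymx -> (forall k, 0 < e 0 k) ->
  pd_mx (mk Q e).
Proof.
move=> uQ he; split.
  rewrite /hermitian_mx /adjmx mk_adj; congr mk; apply/rowP=> k.
  by rewrite mxE geC0_conj // ltW.
move=> v hv; rewrite /adjmx -/(qf (mk Q e) v) qf_mk.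
set w := v *m Q^t*.
have w0 : w != 0.
  apply: contra hv => /eqP w0; apply/eqP.
  by rewrite -[v]mulmx1 -(unitaryK uQ) mulmxA -/w w0 mul0mx.
have [k wk] := row_neq0 w0.
rewrite (bigD1 k) //=; apply: ltr_pwDl.
  by apply: mulr_gt0; [exact: he | rewrite mul_conjC_gt0].
apply: sumr_ge0 => i _; apply: mulr_ge0; [exact: ltW | exact: mul_conjC_ge0].
Qed.

Lemma psd_mk m (Q : 'M[C]_m) (e : 'rV[C]_m) : (forall k, 0 <= e 0 k) -> psd_mx (mk Q e).
Proof.
move=> he; split.
  rewrite /hermitian_mx /adjmx mk_adj; congr mk; apply/rowP=> k.
  by rewrite mxE geC0_conj.
move=> v; rewrite /adjmx -/(qf (mk Q e) v) qf_mk.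
apply: sumr_ge0 => i _; apply: mulr_ge0; [exact: he | exact: mul_conjC_ge0].
Qed.

Lemma pd_dec m (A : 'M[C]_m) : pd_mx A ->
  A = mk (spectralmx A) (spectral_diag A) /\ forall k, 0 < spectral_diag A 0 k.
Proof.
move=> [hA pA].
have nA : A \is normalmx by apply/normalmxP; move: hA; rewrite /hermitian_mx /adjmx => ->.
have /orthomx_spectralP eA := nA.
rewrite invmx_unitary ?spectral_unitarymx // in eA.
split; first by rewrite mkE.
move=> k; set P := spectralmx A; set d := spectral_diag A.
have uP : P \is unitarymx by exact: spectral_unitarymx.
pose v : 'rV[C]_m := delta_mx 0 k *m P.
have wE : v *m P^t* = delta_mx 0 k by rewrite -mulmxA unitaryV // mulmx1.
have v0 : v != 0.
  apply/eqP => v0; move: wE; rewrite v0 mul0mx => /matrixP /(_ 0 k).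
  by rewrite !mxE !eqxx /= => /eqP; rewrite eq_sym oner_eq0.
have := pA v v0; rewrite /adjmx -/(qf A v) eA -/P -/d -mkE qf_mk wE.
rewrite (bigD1 k) //= big1 ?addr0; last first.
  by move=> j /negbTE jk; rewrite mxE jk /= mul0r mulr0.
by rewrite mxE !eqxx /= conjC1 !mulr1.
Qed.

Lemma diag_comm_map (f : C -> C) m (M : 'M[C]_m) (e d : 'rV[C]_m) :
  diag_mx e *m M = M *m diag_mx d ->
  diag_mx (map_mx f e) *m M = M *m diag_mx (map_mx f d).
Proof.
move=> EM; apply/matrixP=> i j; move/matrixP: EM => /(_ i j).
rewrite !mul_diag_mx !mul_mx_diag !mxE => h; apply/eqP; move/eqP: h.
have [M0|Mij] := eqVneq (M i j) 0; first by rewrite M0 !mulr0 !mul0r.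
by rewrite mulrC => /eqP /(mulfI Mij) ->; rewrite mulrC.
Qed.

Lemma mxfun_mk (f : C -> C) m (Q : 'M[C]_m) (e : 'rV[C]_m) : Q \is unitarymx ->
  mxfun f (mk Q e) = mk Q (map_mx f e).
Proof.
move=> uQ; set A := mk Q e.
have nA : A \is normalmx.
  by apply/orthomx_spectral_subproof; exists (Q, e) => //=; rewrite invmx_unitary // /A mkE.
have /orthomx_spectralP eA := nA.
rewrite /mxfun; set P := spectralmx A in eA *; set d := spectral_diag A in eA *.
have uP : P \is unitarymx by exact: spectral_unitarymx.
rewrite invmx_unitary // in eA *.
set M := Q *m P^t*.
have EM : diag_mx e *m M = M *m diag_mx d.
  have : Q *m A *m P^t* = Q *m (P^t* *m diag_mx d *m P) *m P^t* by rewrite -eA.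
  rewrite /A !mkE !mulmxA unitaryV // mul1mx -!mulmxA unitaryV // mulmx1.
  by rewrite !mulmxA.
have FM := diag_comm_map f EM.
have MP : M *m P = Q by rewrite -mulmxA unitaryK // mulmx1.
rewrite !mkE -{2}MP mulmxA -(mulmxA (Q^t*)) FM !mulmxA unitaryK // mul1mx.
by [].
Qed.

End Aux.


Section Aux2.
Variable C : numClosedFieldType.

Lemma ct_block m1 m2 n1 n2 (A : 'M[C]_(m1,n1)) (B : 'M[C]_(m1,n2))
  (D : 'M[C]_(m2,n1)) (E : 'M[C]_(m2,n2)) :
  (block_mx A B D E)^t* = block_mx (A^t*) (D^t*) (B^t*) (E^t*).
Proof. by rewrite tr_block_mx map_block_mx. Qed.

Lemma ct_row m n1 n2 (A : 'M[C]_(m,n1)) (B : 'M[C]_(m,n2)) :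
  (row_mx A B)^t* = col_mx (A^t*) (B^t*).
Proof. by rewrite tr_row_mx map_col_mx. Qed.

Lemma mk_block m1 m2 (Q1 : 'M[C]_m1) (Q2 : 'M[C]_m2) e1 e2 :
  mk (block_mx Q1 0 0 Q2) (row_mx e1 e2) = block_mx (mk Q1 e1) 0 0 (mk Q2 e2).
Proof.
rewrite !mkE ct_block !ct0 diag_mx_row !mulmx_block.
by rewrite !(mulmx0, mul0mx, addr0, add0r).
Qed.

Lemma unitary_block m1 m2 (Q1 : 'M[C]_m1) (Q2 : 'M[C]_m2) :
  Q1 \is unitarymx -> Q2 \is unitarymx -> block_mx Q1 0 0 Q2 \is unitarymx.
Proof.
move=> u1 u2; apply/unitarymxP; rewrite ct_block !ct0 mulmx_block.
rewrite !(mulmx0, mul0mx, addr0, add0r) !unitaryV //.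
by rewrite -scalar_mx_block.
Qed.

Lemma qf_row0 m1 m2 (A : 'M[C]_(m1 + m2)) (x : 'rV[C]_m1) :
  qf A (row_mx x 0) = qf (ulsubmx A) x.
Proof.
rewrite /qf -{1}(submxK A) ct_row ct0 mul_row_block mul_row_col.
by rewrite !(mulmx0, mul0mx, addr0, add0r).
Qed.

Lemma qf_0row m1 m2 (A : 'M[C]_(m1 + m2)) (x : 'rV[C]_m2) :
  qf A (row_mx 0 x) = qf (drsubmx A) x.
Proof.
rewrite /qf -{1}(submxK A) ct_row ct0 mul_row_block mul_row_col.
by rewrite !(mulmx0, mul0mx, addr0, add0r).
Qed.

Lemma pd_qf m (A : 'M[C]_m) v : pd_mx A -> v != 0 -> 0 < qf A v.
Proof. by move=> [_ h] /h. Qed.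
Lemma psd_qf m (A : 'M[C]_m) v : psd_mx A -> 0 <= qf A v.
Proof. by move=> [_ h]; exact: h. Qed.

Lemma pd_add m (A B : 'M[C]_m) : pd_mx A -> psd_mx B -> pd_mx (A + B).
Proof.
move=> [hA pA] [hB pB]; split.
  by move: hA hB; rewrite /hermitian_mx /adjmx ctD => -> ->.
move=> v v0; rewrite /adjmx -/(qf (A + B) v) qfD.
by apply: ltr_pwDl; [exact: pA | exact: pB].
Qed.

Lemma pd_psd m (A : 'M[C]_m) : pd_mx A -> psd_mx A.
Proof.
move=> [hA pA]; split => // v; have [->|v0] := eqVneq v 0.
  by rewrite !mul0mx mxE.
exact/ltW/pA.
Qed.

Lemma psd_conj m p (H : 'M[C]_(p,m)) (A : 'M[C]_p) :
  psd_mx A -> psd_mx (H^t* *m A *m H).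
Proof.
move=> [hA pA]; split.
  by move: hA; rewrite /hermitian_mx /adjmx !ctM ctK mulmxA => ->.
by move=> v; rewrite /adjmx -/(qf _ v) qf_conj; exact: pA.
Qed.

Lemma psd_scale m (A : 'M[C]_m) a : 0 <= a -> psd_mx A -> psd_mx (a *: A).
Proof.
move=> a0 [hA pA]; split.
  by move: hA; rewrite /hermitian_mx /adjmx ctZ geC0_conj // => ->.
by move=> v; rewrite /adjmx -/(qf _ v) qfZ; apply: mulr_ge0 => //; exact: pA.
Qed.

Lemma pd_dr m1 m2 (A : 'M[C]_(m1 + m2)) : pd_mx A -> pd_mx (drsubmx A).
Proof.
move=> [hA pA]; split.
  move: hA; rewrite /hermitian_mx /adjmx => hA.
  by rewrite trmx_drsub map_drsubmx hA.
move=> v v0; rewrite /adjmx -/(qf _ v) -qf_0row; apply: pA.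
apply: contra v0 => /eqP h; apply/eqP.
by move: h; rewrite -row_mx0 => /eq_row_mx [_ ->].
Qed.

Lemma opmono_qf (f : C -> C) m (A B : 'M[C]_m) :
  operator_monotone f -> pd_mx A -> pd_mx B -> psd_mx (B - A) ->
  forall v, qf (mxfun f A) v <= qf (mxfun f B) v.
Proof.
move=> hf pA pB hAB v; have := hf _ _ _ pA pB hAB.
by move=> /(psd_qf v); rewrite qfB subr_ge0.
Qed.

End Aux2.


Section Aux3.
Variable C : numClosedFieldType.

Lemma eps_lim (a b : C) : 0 <= b -> (forall e, 0 < e -> a <= (1 + e) * b) -> a <= b.
Proof.
move=> b0 h.
have br : b \is Num.real by exact: ger0_real.
have ar : a \is Num.real.
  have := h 1 ltr01 => /ler_real ->; apply: ger0_real; apply: mulr_ge0 => //.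
  by apply: addr_ge0; exact: ler01.
rewrite real_leNgt //; apply/negP => ba.
have b1 : 0 < b + 1 by apply: ltr_wpDl => //; exact: ltr01.
set e := (a - b) / (b + 1).
have e0 : 0 < e by apply: divr_gt0 => //; rewrite subr_gt0.
have := h e e0; rewrite mulrDl mul1r.
have : e * b < a - b.
  rewrite /e mulrAC -mulrA -[X in _ < X]mulr1 ltr_pM2l ?subr_gt0 //.
  by rewrite ltr_pdivrMr // mul1r ltrDl ltr01.
rewrite ltrBrDl => lt1 le1.
by have := le_lt_trans le1 lt1; rewrite ltxx.
Qed.

Lemma sqrt_pos (r : C) : 0 < r ->
  [/\ sqrtC r * sqrtC r = r, sqrtC r != 0, 0 < sqrtC r & (sqrtC r)^* = sqrtC r].
Proof.
move=> r0; have s0 : 0 < sqrtC r by rewrite sqrtC_gt0.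
split => //; first by rewrite -expr2 sqrtCK.
  by rewrite gt_eqF.
by rewrite geC0_conj // ltW.
Qed.

Lemma mk_herm m (Q : 'M[C]_m) (e : 'rV[C]_m) : (forall k, 0 <= e 0 k) ->
  (mk Q e)^t* = mk Q e.
Proof. by move=> he; rewrite mk_adj; congr mk; apply/rowP=> k; rewrite mxE geC0_conj. Qed.

Lemma mk_eq m (Q : 'M[C]_m) (a b : 'rV[C]_m) : (forall k, a 0 k = b 0 k) -> mk Q a = mk Q b.
Proof. by move=> h; congr mk; apply/rowP => k; exact: h. Qed.

Lemma mk_mulE m (Q : 'M[C]_m) (a b c : 'rV[C]_m) : Q \is unitarymx ->
  (forall k, a 0 k * b 0 k = c 0 k) -> mk Q a *m mk Q b = mk Q c.
Proof. by move=> uQ h; rewrite mk_mul //; apply: mk_eq => k; rewrite mxE. Qed.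

Lemma mk_1E m (Q : 'M[C]_m) (a : 'rV[C]_m) : Q \is unitarymx ->
  (forall k, a 0 k = 1) -> mk Q a = 1%:M.
Proof. by move=> uQ h; rewrite -(mk1 uQ); apply: mk_eq => k; rewrite mxE. Qed.

Lemma ct_dlsub m1 m2 (A : 'M[C]_(m1 + m2)) : dlsubmx (A^t*) = (ursubmx A)^t*.
Proof. by rewrite trmx_ursub map_dlsubmx. Qed.


Lemma jensen (f : C -> C) m (U : 'M[C]_(m + m)) (W1 W2 W : 'M[C]_m)
  (z1 z2 z : 'rV[C]_m) :
  operator_monotone f -> (forall t, 0 < t -> 0 < f t) ->
  (forall t e, 0 < t -> 0 < e -> f ((1 + e) * t) <= (1 + e) * f t) ->
  U \is unitarymx -> W1 \is unitarymx -> W2 \is unitarymx -> W \is unitarymx ->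
  (forall k, 0 < z1 0 k) -> (forall k, 0 < z2 0 k) -> (forall k, 0 < z 0 k) ->
  ulsubmx (U^t* *m block_mx (mk W1 z1) 0 0 (mk W2 z2) *m U) = mk W z ->
  forall x, qf (ulsubmx (U^t* *m block_mx (mk W1 (map_mx f z1)) 0 0
                                      (mk W2 (map_mx f z2)) *m U)) x
            <= qf (mk W (map_mx f z)) x.
Proof.
move=> hmono fpos fsc uU u1 u2 uW h1 h2 hz hul x.
set Wb := block_mx W1 0 0 W2.
have uWb : Wb \is unitarymx := unitary_block u1 u2.
set zb := row_mx z1 z2.
have hzb : forall k, 0 < zb 0 k.
  by move=> k; rewrite /zb; case: (split_ordP k) => j ->; rewrite ?row_mxEl ?row_mxEr.
have uWU : Wb *m U \is unitarymx := mul_unitarymx uWb uU.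
have MkE : forall g : 'rV[C]_(m+m), U^t* *m mk Wb g *m U = mk (Wb *m U) g.
  by move=> g; rewrite !mkE ctM !mulmxA.
set M := U^t* *m block_mx (mk W1 z1) 0 0 (mk W2 z2) *m U.
have ME : M = mk (Wb *m U) zb by rewrite /M -mk_block MkE.
have FME : U^t* *m block_mx (mk W1 (map_mx f z1)) 0 0 (mk W2 (map_mx f z2)) *m U
           = mxfun f M.
  by rewrite ME mxfun_mk // -MkE map_row_mx mk_block.
rewrite FME -qf_row0.
have pM : pd_mx M by rewrite ME; exact: pd_mk.
have hMh : M^t* = M by case: pM.
apply: eps_lim.
  by apply: psd_qf; apply: psd_mk => k; rewrite mxE ltW // fpos.
move=> e e0.
have e0' : e != 0 by rewrite gt_eqF.
set Z := mk W z in hul *.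
set Zi := mk W (\row_k (z 0 k)^-1).
have ZZi : Z *m Zi = 1%:M by rewrite mk_mul //; apply: mk_1E => // k; rewrite !mxE mulfV // gt_eqF.
have ZiZ : Zi *m Z = 1%:M by apply: mulmx1C.
have ZhZ : Z^t* = Z by apply: mk_herm => k; exact: ltW.
have pZi : pd_mx Zi by apply: pd_mk => // k; rewrite mxE invr_gt0.
set Bm := ursubmx M.
have hdl : dlsubmx M = Bm^t* by rewrite -ct_dlsub hMh.
set D' := drsubmx M + e^-1 *: (Bm^t* *m Zi *m Bm).
set M' := block_mx ((1 + e) *: Z) 0 0 D'.
set H := row_mx (e *: Z) (- Bm).
have hdiff : M' - M = e^-1 *: (H^t* *m Zi *m H).
  rewrite -[X in _ - X](submxK M) hul hdl /M' /H ct_row ctZ ctN ZhZ geC0_conj ?(ltW e0) //.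
  rewrite mul_col_mx mul_col_row opp_block_mx add_block_mx scale_block_mx.
  congr block_mx.
  - rewrite -scalemxAl ZZi -scalemxAl mul1mx !scalerA scalerDl scale1r.
    by rewrite addrAC subrr add0r mulVf // mul1r.
  - by rewrite -scalemxAl ZZi -scalemxAl mul1mx scalerA mulVf // scale1r add0r.
  - by rewrite -scalemxAr -mulmxA ZiZ mulmx1 scalerA mulVf // scale1r add0r.
  - by rewrite /D' addrAC subrr add0r mulNmx mulmxN mulNmx opprK.
have pdiff : psd_mx (M' - M).
  rewrite hdiff; apply: psd_scale; first by rewrite invr_ge0 ltW.
  by apply: psd_conj; exact: pd_psd.
have pM' : pd_mx M'.
  have -> : M' = M + (M' - M) by rewrite addrC subrK.
  exact: pd_add.
have pD' : pd_mx D' by have := pd_dr pM'; rewrite /M' block_mxKdr.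
have [D'E hed] := pd_dec pD'.
have M'E : M' = mk (block_mx W 0 0 (spectralmx D')) (row_mx ((1 + e) *: z) (spectral_diag D')).
  by rewrite mk_block -mk_scale -D'E.
have := opmono_qf hmono pM pM' pdiff (row_mx x 0).
rewrite M'E mxfun_mk ?unitary_block ?spectral_unitarymx // map_row_mx mk_block.
rewrite !qf_row0 block_mxKul => /le_trans; apply.
rewrite !qf_mk mulr_sumr; apply: ler_sum => k _; set w := (x *m W^t*) 0 k; rewrite !mxE [X in _ <= X]mulrA.
apply: ler_wpM2r; first exact: mul_conjC_ge0.
exact: fsc.
Qed.

End Aux3.


Section Aux4.
Variable C : numClosedFieldType.

Definition rsq m (r : 'rV[C]_m) := \row_k sqrtC (r 0 k).
Definition rsqi m (r : 'rV[C]_m) := \row_k (sqrtC (r 0 k))^-1.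
Definition rdiv m (a b : 'rV[C]_m) := \row_k (a 0 k / b 0 k).
Definition rinv m (r : 'rV[C]_m) := \row_k (r 0 k)^-1.
Definition phi (f : C -> C) m (l r : 'rV[C]_m) := \row_k (r 0 k * f (l 0 k / r 0 k)).

Lemma ul_conj m (K1 A K2 B X1 X2 : 'M[C]_m) :
  ulsubmx ((block_mx K1 A K2 B)^t* *m block_mx X1 0 0 X2 *m block_mx K1 A K2 B)
  = K1^t* *m X1 *m K1 + K2^t* *m X2 *m K2.
Proof.
rewrite ct_block !mulmx_block block_mxKul.
by rewrite !(mulmx0, mul0mx, addr0, add0r).
Qed.

Lemma unitary_compl m (K1 A K2 B : 'M[C]_m) :
  K1^t* *m K1 + K2^t* *m K2 = 1%:M -> K1^t* *m A + K2^t* *m B = 0 ->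
  A^t* *m A + B^t* *m B = 1%:M -> block_mx K1 A K2 B \is unitarymx.
Proof.
move=> h1 h2 h3; apply/unitarymxP; apply: mulmx1C.
rewrite ct_block mulmx_block h1 h2 h3.
have -> : A^t* *m K1 + B^t* *m K2 = 0.
  by have := congr1 (fun X => X^t*) h2; rewrite ctD !ctM !ctK ct0.
by rewrite -scalar_mx_block.
Qed.

Section Sq.
Variables (m : nat) (Q : 'M[C]_m) (r : 'rV[C]_m).
Hypotheses (uQ : Q \is unitarymx) (hr : forall k, 0 < r 0 k).

Lemma sq_sqi : mk Q (rsq r) *m mk Q (rsqi r) = 1%:M.
Proof.
rewrite mk_mul //; apply: mk_1E => // k; rewrite !mxE.
by have [_ s0 _ _] := sqrt_pos (hr k); rewrite mulfV.
Qed.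
Lemma sqi_sq : mk Q (rsqi r) *m mk Q (rsq r) = 1%:M.
Proof. exact: mulmx1C sq_sqi. Qed.
Lemma sq_sq : mk Q (rsq r) *m mk Q (rsq r) = mk Q r.
Proof.
rewrite mk_mul //; apply: mk_eq => k; rewrite !mxE.
by have [-> _ _ _] := sqrt_pos (hr k).
Qed.
Lemma sqi_sqi : mk Q (rsqi r) *m mk Q (rsqi r) = mk Q (rinv r).
Proof.
rewrite mk_mul //; apply: mk_eq => k; rewrite !mxE.
by have [h _ _ _] := sqrt_pos (hr k); rewrite -invfM h.
Qed.
Lemma sq_herm : (mk Q (rsq r))^t* = mk Q (rsq r).
Proof.
apply: mk_herm => k; rewrite mxE; have [_ _ h _] := sqrt_pos (hr k); exact: ltW.
Qed.
Lemma sqi_herm : (mk Q (rsqi r))^t* = mk Q (rsqi r).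
Proof.
apply: mk_herm => k; rewrite mxE; have [_ _ h _] := sqrt_pos (hr k).
by rewrite invr_ge0 ltW.
Qed.
Lemma sand (a : 'rV[C]_m) :
  mk Q (rsq r) *m mk Q a *m mk Q (rsq r) = mk Q (\row_k (r 0 k * a 0 k)).
Proof.
rewrite !mk_mul //; apply: mk_eq => k; rewrite !mxE.
have [h _ _ _] := sqrt_pos (hr k).
by rewrite mulrC mulrA h.
Qed.
Lemma sandi (a : 'rV[C]_m) :
  mk Q (rsqi r) *m mk Q a *m mk Q (rsqi r) = mk Q (\row_k (a 0 k / r 0 k)).
Proof.
rewrite !mk_mul //; apply: mk_eq => k; rewrite !mxE.
have [h _ _ _] := sqrt_pos (hr k).
by rewrite mulrC mulrA -invfM h mulrC.
Qed.
End Sq.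
Arguments sq_sqi {m Q r}.
Arguments sqi_sq {m Q r}.
Arguments sq_sq {m Q r}.
Arguments sqi_sqi {m Q r}.
Arguments sq_herm {m Q r}.
Arguments sqi_herm {m Q r}.
Arguments sand {m Q r}.
Arguments sandi {m Q r}.

Lemma mA3 m (X Y Z T : 'M[C]_m) : X *m Y *m (Z *m T) = X *m (Y *m Z *m T).
Proof. by rewrite !mulmxA. Qed.

Lemma sum_sand m (S X Y : 'M[C]_m) : S *m X *m S + S *m Y *m S = S *m (X + Y) *m S.
Proof. by rewrite mulmxDr mulmxDl. Qed.


Lemma persp_super (f : C -> C) m (W1 W2 W : 'M[C]_m) (l1 r1 l2 r2 l r : 'rV[C]_m) :
  operator_monotone f -> (forall t, 0 < t -> 0 < f t) ->
  (forall t e, 0 < t -> 0 < e -> f ((1 + e) * t) <= (1 + e) * f t) ->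
  W1 \is unitarymx -> W2 \is unitarymx -> W \is unitarymx ->
  (forall k, 0 < l1 0 k) -> (forall k, 0 < r1 0 k) ->
  (forall k, 0 < l2 0 k) -> (forall k, 0 < r2 0 k) ->
  (forall k, 0 < l 0 k) -> (forall k, 0 < r 0 k) ->
  mk W1 l1 + mk W2 l2 = mk W l -> mk W1 r1 + mk W2 r2 = mk W r ->
  forall v, qf (mk W1 (phi f l1 r1) + mk W2 (phi f l2 r2)) v
            <= qf (mk W (phi f l r)) v.
Proof.
move=> hmono fpos fsc u1 u2 uW hl1 hr1 hl2 hr2 hl hr hL hR v.
set S := mk W (rsq r); set Si := mk W (rsqi r).
set S1 := mk W1 (rsq r1); set S1i := mk W1 (rsqi r1).
set S2 := mk W2 (rsq r2); set S2i := mk W2 (rsqi r2).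
have Sh : S^t* = S := sq_herm hr.
have Sih : Si^t* = Si := sqi_herm hr.
have S1h : S1^t* = S1 := sq_herm hr1.
have S1ih : S1i^t* = S1i := sqi_herm hr1.
have S2h : S2^t* = S2 := sq_herm hr2.
have S2ih : S2i^t* = S2i := sqi_herm hr2.
set K1 := S1 *m Si; set K2 := S2 *m Si.
have K1h : K1^t* = Si *m S1 by rewrite ctM Sih S1h.
have K2h : K2^t* = Si *m S2 by rewrite ctM Sih S2h.
set G := mk W1 (rinv r1) + mk W2 (rinv r2).
have pG : pd_mx G.
  apply: pd_add; first by apply: pd_mk => // k; rewrite mxE invr_gt0.
  by apply: pd_psd; apply: pd_mk => // k; rewrite mxE invr_gt0.
have [GE heg] := pd_dec pG.
have uQg : spectralmx G \is unitarymx by exact: spectral_unitarymx.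
move: (spectralmx G) (spectral_diag G) GE heg uQg => Qg eg GE heg uQg.
set N := mk Qg (rsqi eg).
have Nh : N^t* = N := sqi_herm heg.
set A := - (S1i *m N); set B := S2i *m N.
have uU : block_mx K1 A K2 B \is unitarymx.
  apply: unitary_compl.
  - rewrite K1h K2h /K1 /K2 !mulmxA -(mulmxA Si S1 S1) -(mulmxA Si S2 S2).
    rewrite (sq_sq u1 hr1) (sq_sq u2 hr2) sum_sand hR /Si (sandi uW hr).
    by apply: mk_1E => // k; rewrite mxE mulfV // gt_eqF.
  - rewrite K1h K2h /A /B mulmxN !mulmxA -(mulmxA Si S1 S1i) -(mulmxA Si S2 S2i).
    by rewrite (sq_sqi u1 hr1) (sq_sqi u2 hr2) !mulmx1 addNr.
  - rewrite /A ctN ctM Nh S1ih ctM Nh S2ih mulNmx mulmxN opprK.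
    rewrite !mulmxA -(mulmxA N S1i S1i) -(mulmxA N S2i S2i) (sqi_sqi u1 hr1) (sqi_sqi u2 hr2).
    rewrite sum_sand -/G GE /N (sandi uQg heg).
    by apply: mk_1E => // k; rewrite mxE mulfV // gt_eqF.
have hz : forall k, 0 < (rdiv l r) 0 k by move=> k; rewrite mxE divr_gt0.
have hz1 : forall k, 0 < (rdiv l1 r1) 0 k by move=> k; rewrite mxE divr_gt0.
have hz2 : forall k, 0 < (rdiv l2 r2) 0 k by move=> k; rewrite mxE divr_gt0.
have hul : ulsubmx ((block_mx K1 A K2 B)^t* *m
             block_mx (mk W1 (rdiv l1 r1)) 0 0 (mk W2 (rdiv l2 r2)) *m block_mx K1 A K2 B)
           = mk W (rdiv l r).
  rewrite ul_conj K1h K2h /K1 /K2 !mulmxA -(mulmxA (Si *m S1)) -(mulmxA (Si *m S2)).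
  rewrite (mA3 Si S1) (mA3 Si S2) /S1 /S2 (sand u1 hr1) (sand u2 hr2).
  have e1 : mk W1 (\row_k (r1 0 k * rdiv l1 r1 0 k)) = mk W1 l1.
    by apply: mk_eq => k; rewrite !mxE mulrC mulfVK // gt_eqF.
  have e2 : mk W2 (\row_k (r2 0 k * rdiv l2 r2 0 k)) = mk W2 l2.
    by apply: mk_eq => k; rewrite !mxE mulrC mulfVK // gt_eqF.
  by rewrite e1 e2 sum_sand hL /Si (sandi uW hr).
have J := jensen hmono fpos fsc uU u1 u2 uW hz1 hz2 hz hul (v *m S).
move: J; rewrite ul_conj K1h K2h /K1 /K2 !mulmxA -(mulmxA (Si *m S1)) -(mulmxA (Si *m S2)).
rewrite (mA3 Si S1) (mA3 Si S2) /S1 /S2 (sand u1 hr1) (sand u2 hr2) sum_sand.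
rewrite -{1}Sih qf_conj Sih -mulmxA (sq_sqi uW hr) mulmx1.
have -> : qf (mk W (map_mx f (rdiv l r))) (v *m S) = qf (mk W (phi f l r)) v.
  by rewrite -{1}Sh -qf_conj Sh /S (sand uW hr); congr qf; apply: mk_eq => k; rewrite !mxE.
suff -> : mk W1 (\row_k (r1 0 k * map_mx f (rdiv l1 r1) 0 k)) +
          mk W2 (\row_k (r2 0 k * map_mx f (rdiv l2 r2) 0 k))
          = mk W1 (phi f l1 r1) + mk W2 (phi f l2 r2) by [].
by congr (_ + _); apply: mk_eq => k; rewrite !mxE.
Qed.

End Aux4.


Section Kron.
Variable C : numClosedFieldType.
Variable n : nat.

Definition idx (c : 'I_(n * n)) : 'I_n * 'I_n :=
  enum_val (cast_ord (esym (mxvec_cast n n)) c).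

Lemma idxK i j : idx (mxvec_index i j) = (i, j).
Proof. by rewrite /idx /mxvec_index cast_ordK enum_rankK. Qed.

Lemma mxvec_index_eq i j k l :
  (mxvec_index i j == mxvec_index k l :> 'I_(n * n)) = (i == k) && (j == l).
Proof.
apply/eqP/andP => [h|[/eqP -> /eqP ->] //].
by have := congr1 idx h; rewrite !idxK => -[-> ->].
Qed.

Lemma sum_idx (F : 'I_(n * n) -> C) :
  \sum_c F c = \sum_i \sum_j F (mxvec_index i j).
Proof.
rewrite pair_big /=.
rewrite (reindex (fun p : 'I_n * 'I_n => mxvec_index p.1 p.2)) //=.
exists idx => [[i j] _|c _]; first by rewrite idxK.
by case/mxvec_indexP: c => i j; rewrite idxK.
Qed.

Definition kron (A B : 'M[C]_n) : 'M[C]_(n * n) :=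
  \matrix_(a, b) (A (idx a).1 (idx b).1 * B (idx a).2 (idx b).2).

Lemma kronE A B i j k l :
  kron A B (mxvec_index i j) (mxvec_index k l) = A i k * B j l.
Proof. by rewrite mxE !idxK. Qed.

Lemma kron_mul A B D E : kron A B *m kron D E = kron (A *m D) (B *m E).
Proof.
apply/matrixP => a b; case/mxvec_indexP: a => i j; case/mxvec_indexP: b => k l.
rewrite kronE !mxE sum_idx big_distrlr /=; apply: eq_bigr => p _.
apply: eq_bigr => q _; rewrite !kronE.
by rewrite mulrACA.
Qed.

Lemma kron_ct A B : (kron A B)^t* = kron (A^t*) (B^t*).
Proof. by apply/matrixP => a b; rewrite !mxE rmorphM. Qed.

Lemma kron11 : kron 1%:M 1%:M = 1%:M.
Proof.
apply/matrixP => a b; case/mxvec_indexP: a => i j; case/mxvec_indexP: b => k l.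
rewrite kronE !mxE mxvec_index_eq.
by case: (i == k); case: (j == l); rewrite /= ?mulr1 ?mul1r ?mulr0 ?mul0r.
Qed.

Lemma kron_unitary A B : A \is unitarymx -> B \is unitarymx -> kron A B \is unitarymx.
Proof.
move=> uA uB; apply/unitarymxP.
by rewrite kron_ct kron_mul !unitaryV // kron11.
Qed.

Definition rowL (d : 'rV[C]_n) : 'rV[C]_(n * n) := \row_c d 0 (idx c).1.
Definition rowR (d : 'rV[C]_n) : 'rV[C]_(n * n) := \row_c d 0 (idx c).2.

Lemma kron_diag1 d : kron (diag_mx d) 1%:M = diag_mx (rowL d).
Proof.
apply/matrixP => a b; case/mxvec_indexP: a => i j; case/mxvec_indexP: b => k l.
rewrite kronE !mxE mxvec_index_eq idxK /=.
by case: (i == k); case: (j == l); rewrite /= ?mulr1 ?mul1r ?mulr0 ?mul0r.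
Qed.

Lemma kron_1diag d : kron 1%:M (diag_mx d) = diag_mx (rowR d).
Proof.
apply/matrixP => a b; case/mxvec_indexP: a => i j; case/mxvec_indexP: b => k l.
rewrite kronE !mxE mxvec_index_eq idxK /=.
by case: (i == k); case: (j == l); rewrite /= ?mulr1 ?mul1r ?mulr0 ?mul0r ?mulr0n.
Qed.

Lemma kron_linl a b (A B D : 'M[C]_n) :
  kron (a *: A + b *: B) D = a *: kron A D + b *: kron B D.
Proof. by apply/matrixP => x y; rewrite !mxE mulrDl !mulrA. Qed.

Lemma mxvec_kron (X A B : 'M[C]_n) :
  mxvec X *m kron A B = mxvec (A^T *m X *m B).
Proof.
apply/rowP => c; case/mxvec_indexP: c => k l.
rewrite mxvecE !mxE sum_idx.
under eq_bigr do under eq_bigr do rewrite mxvecE kronE.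
rewrite (exchange_big) /=; apply: eq_bigr => j _.
rewrite !mxE mulr_suml; apply: eq_bigr => i _.
by rewrite !mxE mulrA (mulrC (X i j)).
Qed.

End Kron.


Section Six.
Variable C : numClosedFieldType.

Lemma conj_ct n (P : 'M[C]_n) : (map_mx conjC P)^t* = P^T.
Proof. by apply/matrixP => i j; rewrite !mxE conjCK. Qed.

Lemma ct_tr n (P : 'M[C]_n) : (P^t*)^T = map_mx conjC P.
Proof. by apply/matrixP => i j; rewrite !mxE. Qed.

Definition Wmat n (P : 'M[C]_n) := kron (map_mx conjC P) P.

Lemma W_unitary n (P : 'M[C]_n) : P \is unitarymx -> Wmat P \is unitarymx.
Proof. by move=> uP; apply: kron_unitary => //; rewrite conjC_unitary. Qed.

Lemma Wct n (P : 'M[C]_n) : (Wmat P)^t* = kron (P^T) (P^t*).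
Proof. by rewrite /Wmat kron_ct conj_ct. Qed.

Lemma mkL n (P : 'M[C]_n) (d : 'rV[C]_n) : P \is unitarymx ->
  mk (Wmat P) (rowL d) = kron ((mk P d)^T) 1%:M.
Proof.
move=> uP; rewrite mkE Wct -kron_diag1 /Wmat !kron_mul mulmx1 unitaryK //.
by rewrite mkE !trmx_mul tr_diag_mx ct_tr mulmxA.
Qed.

Lemma mkR n (P : 'M[C]_n) (d : 'rV[C]_n) : P \is unitarymx ->
  mk (Wmat P) (rowR d) = kron 1%:M (mk P d).
Proof.
move=> uP; rewrite mkE Wct -kron_1diag /Wmat !kron_mul mulmx1 mkE.
by rewrite -ct_tr -trmx_mul unitaryK // trmx1.
Qed.

Lemma vecW n (P Y : 'M[C]_n) : mxvec Y *m (Wmat P)^t* = mxvec (P *m Y *m P^t*).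
Proof. by rewrite Wct mxvec_kron trmxK. Qed.

Definition Phi (f : C -> C) n (P : 'M[C]_n) (d : 'rV[C]_n) (Y : 'M[C]_n) :=
  \sum_i \sum_j (d 0 j * f (d 0 i / d 0 j)) *
     ((P *m Y *m P^t*) i j * ((P *m Y *m P^t*) i j)^*).

Lemma Phi_qf (f : C -> C) n (P : 'M[C]_n) (d : 'rV[C]_n) (Y : 'M[C]_n) :
  Phi f P d Y = qf (mk (Wmat P) (phi f (rowL d) (rowR d))) (mxvec Y).
Proof.
rewrite qf_mk vecW sum_idx /Phi; apply: eq_bigr => i _; apply: eq_bigr => j _.
by rewrite mxvecE !mxE idxK.
Qed.

Lemma tr_ct n (A B : 'M[C]_n) :
  \tr (A^t* *m B) = \sum_i \sum_j (A i j)^* * B i j.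
Proof.
rewrite /mxtrace exchange_big /=; apply: eq_bigr => i _.
by rewrite mxE; apply: eq_bigr => j _; rewrite !mxE.
Qed.

Lemma tr_unit n (P A B : 'M[C]_n) : P \is unitarymx ->
  \tr (A^t* *m B) = \tr ((P *m A *m P^t*)^t* *m (P *m B *m P^t*)).
Proof.
move=> uP; have -> : (P *m A *m P^t*)^t* = P *m A^t* *m P^t*.
  by rewrite !ctM ctK mulmxA.
have -> : P *m A^t* *m P^t* *m (P *m B *m P^t*) = P *m (A^t* *m B) *m P^t*.
  by rewrite !mulmxA -(mulmxA _ (P^t*) P) unitaryK // mulmx1.
by rewrite [in RHS]mxtrace_mulC (mulmxA (P^t*)) unitaryK // mul1mx.
Qed.

End Six.


Section Seven.
Variable C : numClosedFieldType.

Definition ip n (X Y : 'M[C]_n) := \tr (Y^t* *m X) + \tr (X^t* *m Y).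

Lemma var_ineq (g x y : C) : 0 < g ->
  (y^* * x + x^* * y) - g * (y * y^*) <= x^* * (g^-1 * x).
Proof.
move=> g0; have gn : g != 0 by rewrite gt_eqF.
have gc : g^* = g by rewrite geC0_conj // ltW.
have h := mul_conjC_ge0 (x - g * y).
rewrite -subr_ge0.
have -> : x^* * (g^-1 * x) - ((y^* * x + x^* * y) - g * (y * y^*))
          = g^-1 * ((x - g * y) * (x - g * y)^*).
  by rewrite rmorphB /= rmorphM /= gc; field.
by apply: mulr_ge0 => //; rewrite invr_ge0 ltW.
Qed.

Lemma chi2E (f : C -> C) n (rho sigma : 'M[C]_n) :
  let P := spectralmx sigma in let d := spectral_diag sigma in
  let X' := P *m (rho - sigma) *m P^t* in
  chi2 f rho sigma = \sum_i \sum_j ((X' i j)^* * (MC_fun f (d 0 i) (d 0 j) * X' i j)).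
Proof.
move=> P d X'; have uP : P \is unitarymx by exact: spectral_unitarymx.
rewrite /chi2 /monotone_metric /joint_fun /adjmx -/P -/d invmx_unitary //.
rewrite (tr_unit _ _ uP) -/X'.
set Mat := \matrix_(i, j) _.
have -> : P *m (P^t* *m Mat *m P) *m P^t* = Mat.
  by rewrite !mulmxA unitaryV // mul1mx -mulmxA unitaryV // mulmx1.
by rewrite tr_ct; apply: eq_bigr => i _; apply: eq_bigr => j _; rewrite [Mat i j]mxE.
Qed.

Lemma ipE n (P X Y : 'M[C]_n) : P \is unitarymx ->
  ip X Y = \sum_i \sum_j (((P *m Y *m P^t*) i j)^* * (P *m X *m P^t*) i j
                        + ((P *m X *m P^t*) i j)^* * (P *m Y *m P^t*) i j).
Proof.
move=> uP; rewrite /ip (tr_unit _ _ uP) (tr_unit _ _ uP) !tr_ct -big_split.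
by apply: eq_bigr => i _; rewrite -big_split.
Qed.

Lemma var_chi (f : C -> C) n (rho sigma Y : 'M[C]_n) :
  (forall t, 0 < t -> 0 < f t) -> pd_mx sigma ->
  ip (rho - sigma) Y - Phi f (spectralmx sigma) (spectral_diag sigma) Y
  <= chi2 f rho sigma.
Proof.
move=> fpos ps; have [_ hd] := pd_dec ps.
have uP : spectralmx sigma \is unitarymx by exact: spectral_unitarymx.
rewrite chi2E (ipE _ _ uP) /Phi -sumrB; apply: ler_sum => i _.
rewrite -sumrB; apply: ler_sum => j _.
rewrite /MC_fun; apply: var_ineq.
by apply: mulr_gt0; [exact: hd | apply: fpos; apply: divr_gt0].
Qed.

Lemma eq_chi (f : C -> C) n (rho sigma : 'M[C]_n) :
  (forall t, 0 < t -> 0 < f t) -> pd_mx sigma ->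
  chi2 f rho sigma =
  ip (rho - sigma) (joint_fun (MC_fun f) sigma (rho - sigma))
  - Phi f (spectralmx sigma) (spectral_diag sigma)
        (joint_fun (MC_fun f) sigma (rho - sigma)).
Proof.
move=> fpos ps; have [_ hd] := pd_dec ps.
set P := spectralmx sigma; set d := spectral_diag sigma.
have uP : P \is unitarymx by exact: spectral_unitarymx.
rewrite chi2E (ipE _ _ uP) /Phi -sumrB; apply: eq_bigr => i _.
rewrite -sumrB; apply: eq_bigr => j _.
have -> : P *m joint_fun (MC_fun f) sigma (rho - sigma) *m P^t* =
   \matrix_(i, j) (MC_fun f (d 0 i) (d 0 j) * (P *m (rho - sigma) *m invmx P) i j).
  rewrite /joint_fun -/P -/d invmx_unitary //.
  by rewrite !mulmxA unitaryV // mul1mx -mulmxA unitaryV // mulmx1.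
rewrite invmx_unitary // mxE /MC_fun.
set g := d 0 j * f (d 0 i / d 0 j); set x := (P *m (rho - sigma) *m P^t*) i j.
have g0 : 0 < g by apply: mulr_gt0; [exact: hd | apply: fpos; apply: divr_gt0].
have gn : g != 0 by rewrite gt_eqF.
have gc : g^-1^* = g^-1 by rewrite geC0_conj // invr_ge0 ltW.
by rewrite !rmorphM /= gc; field.
Qed.

End Seven.


Section Eight.
Variable C : numClosedFieldType.

Lemma kron_linr n a b (A B D : 'M[C]_n) :
  kron D (a *: A + b *: B) = a *: kron D A + b *: kron D B.
Proof. by apply/matrixP => x y; rewrite !mxE; ring. Qed.

Lemma tr_lin n a b (A B : 'M[C]_n) : (a *: A + b *: B)^T = a *: A^T + b *: B^T.
Proof. by apply/matrixP => x y; rewrite !mxE. Qed.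

Lemma phi_scale (f : C -> C) m a (l r : 'rV[C]_m) : a != 0 ->
  phi f (a *: l) (a *: r) = a *: phi f l r.
Proof.
move=> a0; apply/rowP => k; rewrite !mxE invfM mulrACA mulfV // mul1r.
by rewrite mulrA.
Qed.

Lemma pd_scale m a (A : 'M[C]_m) : 0 < a -> pd_mx A -> pd_mx (a *: A).
Proof.
move=> a0 [hA pA]; split.
  by move: hA; rewrite /hermitian_mx /adjmx ctZ geC0_conj ?ltW // => ->.
by move=> v v0; rewrite /adjmx -/(qf _ v) qfZ; apply: mulr_gt0 => //; exact: pA.
Qed.

Lemma conc (f : C -> C) n (s1 s2 : 'M[C]_n) lam (Y : 'M[C]_n) :
  operator_monotone f -> (forall t, 0 < t -> 0 < f t) ->
  (forall t e, 0 < t -> 0 < e -> f ((1 + e) * t) <= (1 + e) * f t) ->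
  pd_mx s1 -> pd_mx s2 -> 0 < lam -> lam < 1 ->
  lam * Phi f (spectralmx s1) (spectral_diag s1) Y
  + (1 - lam) * Phi f (spectralmx s2) (spectral_diag s2) Y
  <= Phi f (spectralmx (lam *: s1 + (1 - lam) *: s2))
           (spectral_diag (lam *: s1 + (1 - lam) *: s2)) Y.
Proof.
move=> hmono fpos fsc ps1 ps2 l0 l1.
have l1' : 0 < 1 - lam by rewrite subr_gt0.
set s := lam *: s1 + (1 - lam) *: s2.
have ps : pd_mx s by apply: pd_add; [exact: pd_scale | apply: pd_psd; exact: pd_scale].
have [E1 hd1] := pd_dec ps1; have [E2 hd2] := pd_dec ps2; have [E hd] := pd_dec ps.
have uP1 : spectralmx s1 \is unitarymx by exact: spectral_unitarymx.
have uP2 : spectralmx s2 \is unitarymx by exact: spectral_unitarymx.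
have uP : spectralmx s \is unitarymx by exact: spectral_unitarymx.
move: (spectralmx s1) (spectral_diag s1) (spectralmx s2) (spectral_diag s2)
  (spectralmx s) (spectral_diag s) E1 hd1 E2 hd2 E hd uP1 uP2 uP
  => P1 d1 P2 d2 P d E1 hd1 E2 hd2 E hd uP1 uP2 uP.
have hL : mk (Wmat P1) (lam *: rowL d1) + mk (Wmat P2) ((1 - lam) *: rowL d2)
          = mk (Wmat P) (rowL d).
  by rewrite -!mk_scale !mkL // -E1 -E2 -E -!kron_linl tr_lin.
have hR : mk (Wmat P1) (lam *: rowR d1) + mk (Wmat P2) ((1 - lam) *: rowR d2)
          = mk (Wmat P) (rowR d).
  by rewrite -!mk_scale !mkR // -E1 -E2 -E -!kron_linr.
have p1 : forall k, 0 < (lam *: rowL d1) 0 k by move=> k; rewrite !mxE mulr_gt0.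
have p2 : forall k, 0 < (lam *: rowR d1) 0 k by move=> k; rewrite !mxE mulr_gt0.
have p3 : forall k, 0 < ((1 - lam) *: rowL d2) 0 k by move=> k; rewrite !mxE mulr_gt0.
have p4 : forall k, 0 < ((1 - lam) *: rowR d2) 0 k by move=> k; rewrite !mxE mulr_gt0.
have p5 : forall k, 0 < (rowL d) 0 k by move=> k; rewrite !mxE.
have p6 : forall k, 0 < (rowR d) 0 k by move=> k; rewrite !mxE.
have H := persp_super hmono fpos fsc (W_unitary uP1) (W_unitary uP2) (W_unitary uP)
  p1 p2 p3 p4 p5 p6 hL hR (mxvec Y).
move: H; rewrite !phi_scale ?gt_eqF // -!mk_scale qfD !qfZ.
by rewrite !Phi_qf.
Qed.

End Eight.


Section Nine.
Variable C : numClosedFieldType.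

Lemma fmono (f : C -> C) a b : operator_monotone f -> 0 < a -> a <= b -> f a <= f b.
Proof.
move=> hmono a0 ab.
have b0 : 0 < b := lt_le_trans a0 ab.
have u1 : (1%:M : 'M[C]_1) \is unitarymx by apply/unitarymxP; rewrite ct1 mulmx1.
have pA : pd_mx (mk 1%:M (const_mx a : 'rV[C]_1)) by apply: pd_mk => // k; rewrite mxE.
have pB : pd_mx (mk 1%:M (const_mx b : 'rV[C]_1)) by apply: pd_mk => // k; rewrite mxE.
have hd : psd_mx (mk 1%:M (const_mx b : 'rV[C]_1) - mk 1%:M (const_mx a)).
  rewrite -scaleN1r mk_scale mk_add; apply: psd_mk => k.
  by rewrite !mxE mulN1r subr_ge0.
have := opmono_qf hmono pA pB hd (const_mx 1).
rewrite !mxfun_mk // !qf_mk ct1 mulmx1 !big_ord1 !mxE conjC1 !mulr1.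
done.
Qed.

Lemma fscale (f : C -> C) : operator_monotone f ->
  (forall t, 0 < t -> f t = t * f t^-1) ->
  forall t e, 0 < t -> 0 < e -> f ((1 + e) * t) <= (1 + e) * f t.
Proof.
move=> hmono hsym t e t0 e0.
have e1 : 0 < 1 + e by rewrite addr_gt0 // ltr01.
have et : 0 < (1 + e) * t by rewrite mulr_gt0.
rewrite (hsym _ et) [X in _ <= _ * X](hsym _ t0) mulrA.
apply: ler_wpM2l; first exact: ltW.
apply: fmono => //; first by rewrite invr_gt0.
rewrite lef_pV2 ?posrE //.
by apply: ler_peMl; [exact: ltW | rewrite lerDl ltW].
Qed.

Lemma ip_lin n (X1 X2 Y : 'M[C]_n) a b : 0 <= a -> 0 <= b ->
  ip (a *: X1 + b *: X2) Y = a * ip X1 Y + b * ip X2 Y.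
Proof.
move=> a0 b0; rewrite /ip ctD !ctZ !geC0_conj //.
rewrite mulmxDr mulmxDl -!scalemxAr -!scalemxAl !mxtraceD !mxtraceZ.
ring.
Qed.

End Nine.

Theorem mainTheorem1 (C : numClosedFieldType) (f : C -> C) (n : nat)
  (hf : F_op f) (hn : (1 <= n)%N)
  (rho1 rho2 sigma1 sigma2 : 'M[C]_n)
  (hr1 : pd_density_mx rho1) (hr2 : pd_density_mx rho2)
  (hs1 : pd_density_mx sigma1) (hs2 : pd_density_mx sigma2)
  (lam : C) (hl0 : 0 <= lam) (hl1 : lam <= 1) :
  chi2 f (lam *: rho1 + (1 - lam) *: rho2) (lam *: sigma1 + (1 - lam) *: sigma2)
  <= lam * chi2 f rho1 sigma1 + (1 - lam) * chi2 f rho2 sigma2.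
Proof.
case: hf => fpos hmono hsym _.
have fsc := fscale hmono hsym.
have [->|ln0] := eqVneq lam 0.
  by rewrite !scale0r !add0r subr0 !scale1r mul0r add0r mul1r.
have [->|ln1] := eqVneq lam 1.
  by rewrite !scale1r subrr !scale0r !addr0 mul0r addr0 mul1r.
have l0 : 0 < lam by rewrite lt_def ln0.
have l1 : lam < 1 by rewrite lt_def eq_sym ln1.
have l1' : 0 <= 1 - lam by rewrite subr_ge0.
case: hs1 => ps1 _; case: hs2 => ps2 _.
have ps : pd_mx (lam *: sigma1 + (1 - lam) *: sigma2).
  apply: pd_add; first exact: pd_scale.
  by apply: pd_psd; apply: pd_scale => //; rewrite subr_gt0.
rewrite (eq_chi _ fpos ps).
set Y := joint_fun _ _ _.
have v1 := var_chi rho1 Y fpos ps1.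
have v2 := var_chi rho2 Y fpos ps2.
have cc := conc Y hmono fpos fsc ps1 ps2 l0 l1.
have -> : lam *: rho1 + (1 - lam) *: rho2 - (lam *: sigma1 + (1 - lam) *: sigma2)
          = lam *: (rho1 - sigma1) + (1 - lam) *: (rho2 - sigma2).
  by apply/matrixP => i j; rewrite !mxE; ring.
rewrite ip_lin //.
apply: le_trans (_ : lam * (ip (rho1 - sigma1) Y - Phi f (spectralmx sigma1) (spectral_diag sigma1) Y)
   + (1 - lam) * (ip (rho2 - sigma2) Y - Phi f (spectralmx sigma2) (spectral_diag sigma2) Y) <= _).
  set a := ip _ Y; set b := ip _ Y.
  have -> : lam * (a - Phi f (spectralmx sigma1) (spectral_diag sigma1) Y) +
     (1 - lam) * (b - Phi f (spectralmx sigma2) (spectral_diag sigma2) Y)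
   = (lam * a + (1 - lam) * b) - (lam * Phi f (spectralmx sigma1) (spectral_diag sigma1) Y
      + (1 - lam) * Phi f (spectralmx sigma2) (spectral_diag sigma2) Y) by ring.
  by apply: lerB.
by apply: lerD; apply: ler_wpM2l.
Qed.
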